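(* Let $2\le j\le n$ and let $K_j\subset\wedge^j\mathbb{R}^n$ be a proper cone. Suppose there exists a basis $e_1',\ldots,e_n'$ of $\mathbb{R}^n$ such that $K_j\subseteq K_j'$, where $K_j'\subset\wedge^j\mathbb{R}^n$ is an exterior basic cone defined by this basis. Then the set $T(K_j)$, if it is nonempty, is a cone of rank $j$ in $\mathbb{R}^n$.
   Context: A proper cone is a closed convex cone that is pointed and solid. $\wedge^j\mathbb{R}^n$ is the $j$th exterior power of $\mathbb{R}^n$. An exterior basic cone defined by a basis $e_1',\ldots,e_n'$ is a cone in $\wedge^j\mathbb{R}^n$ spanned (as nonnegative linear combinations) by vectors $\sigma_{i_1\ldots i_j}\,(e'_{i_1}\wedge\cdots\wedge e'_{i_j})$, $1\le i_1<\cdots<i_j\le n$, where each sign $\sigma_{i_1\ldots i_j}\in\{1,-1\}$ is fixed. $T(K_j)$ is the closure of the set of all $x_1\in\mathbb{R}^n$ for which there exist $x_2,\ldots,x_j\in\mathbb{R}^n$ with $x_1\wedge\cdots\wedge x_j\in\operatorname{int}(K_j)\cup\operatorname{int}(-K_j)$. A closed subset $T\subset\mathbb{R}^n$ is a cone of rank $k$ if $\alpha x\in T$ for all $x\in T$, $\alpha\in\mathbb{R}$, and $T$ contains at least one $k$-dimensional linear subspace but no linear subspace of dimension greater than $k$. *)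

(* Defs.v *)
From HB Require Import structures.
From mathcomp Require Import all_boot all_order all_algebra.
From mathcomp Require Import reals.
Set Implicit Arguments. Unset Strict Implicit. Unset Printing Implicit Defensive.
Import Order.TTheory GRing.Theory Num.Theory.
Local Open Scope ring_scope.

(* Index set of the standard basis e_{i_1} /\ ... /\ e_{i_j} of wedge^j R^n:
   the j-element subsets of {0,...,n-1}. *)
Definition jsub (n j : nat) := {S : {set 'I_n} | #|S| == j}.

(* wedge^j R^n, in coordinates with respect to the standard basis. *)
Definition ext (R : realType) (n j : nat) := jsub n j -> R.

(* For S = {i_1 < ... < i_j}, the increasing enumeration b |-> i_(b+1). *)
Definition jidx (n j : nat) (S : jsub n j) : 'I_j -> 'I_n :=
  fun b => enum_val (cast_ord (esym (eqP (valP S))) b).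

(* x_1 /\ ... /\ x_j, where x_k is the k-th row of X: its S-coordinate is the
   j x j minor of X on the columns i_1 < ... < i_j. *)
Definition wedge (R : realType) (n j : nat) (X : 'M[R]_(j, n)) : ext R n j :=
  fun S => \det (colsub (@jidx n j S) X).

Definition ext_interior (R : realType) (n j : nat) (K : ext R n j -> Prop)
  (w : ext R n j) : Prop :=
  exists2 e : R, 0 < e & forall v : ext R n j,
    (forall S, `|v S - w S| < e) -> K v.

Definition ext_closed (R : realType) (n j : nat) (K : ext R n j -> Prop) : Prop :=
  forall w : ext R n j,
    (forall e : R, 0 < e -> exists v, K v /\ forall S, `|v S - w S| < e) -> K w.

Definition ext_neg (R : realType) (n j : nat) (K : ext R n j -> Prop) :
  ext R n j -> Prop := fun w => K (fun S => - w S).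

Definition proper_cone (R : realType) (n j : nat) (K : ext R n j -> Prop) : Prop :=
  [/\ ext_closed K,
      K (fun _ => 0) /\
      (forall v w, K v -> K w -> K (fun S => v S + w S)),
      (forall (a : R) w, 0 <= a -> K w -> K (fun S => a * w S)),
      (forall w, K w -> K (fun S => - w S) -> forall S, w S = 0)
    & exists w, ext_interior K w].

(* Exterior basic cone defined by the basis e'_1..e'_n (rows of E) and the
   signs sigma_S = (-1)^(sigma S): nonnegative combinations of the vectors
   sigma_S e'_{i_1} /\ ... /\ e'_{i_j}. *)
Definition basic_cone (R : realType) (n j : nat) (E : 'M[R]_n)
  (sigma : jsub n j -> bool) : ext R n j -> Prop :=
  fun w => exists c : jsub n j -> R, (forall S, 0 <= c S) /\
    forall S', w S' = \sum_(S : jsub n j)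
        c S * ((-1) ^+ sigma S * wedge (rowsub (@jidx n j S) E) S').

Definition rv_closure (R : realType) (n : nat) (A : 'rV[R]_n -> Prop)
  (x : 'rV[R]_n) : Prop :=
  forall e : R, 0 < e -> exists y, A y /\ forall i, `|y ord0 i - x ord0 i| < e.

Definition rv_closed (R : realType) (n : nat) (A : 'rV[R]_n -> Prop) : Prop :=
  forall x, rv_closure A x -> A x.

Definition Tset (R : realType) (n j : nat) (K : ext R n j -> Prop) :
  'rV[R]_n -> Prop :=
  rv_closure (fun x => exists X : 'M[R]_(j, n),
     (forall i : 'I_j, val i = 0%N -> row i X = x) /\
     (ext_interior K (wedge X) \/ ext_interior (ext_neg K) (wedge X))).

Definition subspace_in (R : realType) (n : nat) (U : 'M[R]_n)
  (T : 'rV[R]_n -> Prop) : Prop :=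
  forall v : 'rV[R]_n, (v <= U)%MS -> T v.

Definition cone_of_rank (R : realType) (n k : nat) (T : 'rV[R]_n -> Prop) : Prop :=
  [/\ rv_closed T,
      (forall (a : R) x, T x -> T (a *: x)),
      (exists U : 'M[R]_n, \rank U = k /\ subspace_in U T)
    & (forall U : 'M[R]_n, subspace_in U T -> (\rank U <= k)%N)].

(* Main.v *)
Require Import Defs.
From HB Require Import structures.
From mathcomp Require Import all_boot all_order all_algebra.
From mathcomp Require Import reals.
From mathcomp Require Import perm.
From Stdlib Require Import FunctionalExtensionality.
From mathcomp Require Import ring lra.
Set Implicit Arguments. Unset Strict Implicit. Unset Printing Implicit Defensive.
Import Order.TTheory GRing.Theory Num.Theory.
Local Open Scope ring_scope.

Lemma jidxP n j (S : jsub n j) b : jidx S b \in val S.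
Proof. exact: enum_valP. Qed.

Lemma jidx_inj n j (S : jsub n j) : injective (jidx S).
Proof. by move=> a b /enum_val_inj /cast_ord_inj. Qed.

Lemma jidx_onto n j (S : jsub n j) x : x \in val S -> exists b, jidx S b = x.
Proof.
move=> Hx; exists (cast_ord (eqP (valP S)) (enum_rank_in Hx x)).
by rewrite /jidx cast_ordK enum_rankK_in.
Qed.

Lemma jdecomp n j (h : 'I_j -> 'I_n) : injective h ->
  exists (S : jsub n j) (s : 'S_j), forall b, h b = jidx S (s b).
Proof.
move=> hinj.
have cS : #|h @: [set: 'I_j]| == j by rewrite card_imset // cardsT card_ord.
pose S : jsub n j := exist (fun A : {set 'I_n} => #|A| == j) _ cS.
have Hb : forall b, exists b', h b = jidx S b'.
  move=> b; have [b' Hb'] := @jidx_onto n j S (h b) (imset_f _ (in_setT b)).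
  by exists b'.
have [s0 Hs0] := fin_all_exists Hb.
have s0inj : injective s0 by move=> a b E; apply: hinj; rewrite !Hs0 E.
exists S, (perm s0inj) => b; by rewrite permE.
Qed.


Lemma CB0 (R : comRingType) j n (A : 'M[R]_(j,n)) (B : 'M[R]_(n,j)) :
  \det (A *m B) = \sum_(f : {ffun 'I_j -> 'I_n}) (\prod_i A i (f i)) * \det (rowsub f B).
Proof.
rewrite /(\det (A *m B)).
under eq_bigr => s _.
  rewrite (eq_bigr (fun i => \sum_k A i k * B k (s i))); last by move=> i _; rewrite mxE.
  rewrite bigA_distr_bigA big_distrr /=.
  over.
rewrite exchange_big /=; apply: eq_bigr => f _.
rewrite /(\det (rowsub f B)) big_distrr /=; apply: eq_bigr => s _.
rewrite big_split /= mulrCA; congr (_ * (_ * _)).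
by apply: eq_bigr => i _; rewrite mxE.
Qed.

Lemma det_rowsub_perm (R : comRingType) j n (g : 'I_j -> 'I_n) (s : 'S_j) (B : 'M[R]_(n,j)) :
  \det (rowsub (g \o s) B) = (-1) ^+ s * \det (rowsub g B).
Proof.
have -> : rowsub (g \o s) B = row_perm s (rowsub g B) by apply/matrixP => a b; rewrite !mxE.
by rewrite row_permE det_mulmx det_perm.
Qed.

Definition hmap n j (p : jsub n j * 'S_j) : {ffun 'I_j -> 'I_n} :=
  [ffun i => jidx p.1 (p.2 i)].

Lemma hmap_inj n j : injective (@hmap n j).
Proof.
move=> [S s] [S' s'] /ffunP /= E.
have ES : S = S'.
  apply: val_inj; apply/eqP; rewrite eqEcard (eqP (valP S)) (eqP (valP S')) leqnn andbT.
  apply/subsetP => x /jidx_onto [b <-].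
  have := E (s^-1 b)%g; rewrite !ffunE /= permKV => ->; exact: jidxP.
subst S'; congr (_, _); apply/permP => i.
by have := E i; rewrite !ffunE /= => /jidx_inj.
Qed.

Lemma CB (R : comRingType) j n (A : 'M[R]_(j,n)) (B : 'M[R]_(n,j)) :
  \det (A *m B) = \sum_(S : jsub n j) \det (colsub (jidx S) A) * \det (rowsub (jidx S) B).
Proof.
pose G (f : {ffun 'I_j -> 'I_n}) := (\prod_i A i (f i)) * \det (rowsub f B).
have RHS : \sum_(S : jsub n j) \det (colsub (jidx S) A) * \det (rowsub (jidx S) B)
    = \sum_(p : jsub n j * 'S_j) G (hmap p).
  rewrite [RHS](eq_bigr (fun p => G (hmap (p.1, p.2)))); last by case.
  rewrite -(pair_bigA _ (fun S s => G (hmap (S, s)))) /=; apply: eq_bigr => S _.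
  rewrite /(\det (colsub _ A)) big_distrl /=.
  apply eq_bigr => s _.
  rewrite /G.
  have -> : rowsub (hmap (S, s)) B = rowsub (jidx S \o s) B.
    by apply/matrixP => a b; rewrite !mxE ffunE.
  rewrite det_rowsub_perm [RHS]mulrCA -mulrA; congr (_ * (_ * _)).
  by apply: eq_bigr => i _; rewrite !mxE ffunE.
rewrite RHS CB0 (bigID (fun f => f \in @hmap n j @: [set: jsub n j * 'S_j])) /=.
rewrite [X in _ + X]big1 ?addr0.
  rewrite big_imset /=; first by apply: eq_bigl => p; rewrite in_setT.
  by move=> p q _ _; apply: hmap_inj.
move=> f Hf.
have : ~~ injectiveb f.
  apply: contra Hf => /injectiveP finj.
  have [S [s Hs]] := jdecomp finj.
  apply/imsetP; exists (S, s); first by rewrite in_setT.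
  by apply/ffunP => i; rewrite ffunE Hs.
case/injectivePn => i1 [i2 Di12 Ef12].
rewrite (determinant_alternate Di12) ?mulr0 // => k.
by rewrite !mxE Ef12.
Qed.


Definition vT (R : realType) n j (E : 'M[R]_n) (T : jsub n j) : ext R n j :=
  wedge (rowsub (jidx T) E).

Definition phi (R : realType) n j (F : 'M[R]_n) (S : jsub n j) (w : ext R n j) : R :=
  \sum_(S' : jsub n j) w S' * \det (rowsub (jidx S') (colsub (jidx S) F)).

Lemma phi_wedge (R : realType) n j (F : 'M[R]_n) (S : jsub n j) (X : 'M[R]_(j, n)) :
  phi F S (wedge X) = \det (colsub (jidx S) (X *m F)).
Proof. by rewrite -mulmx_colsub CB. Qed.

Lemma jsub_neq n j (S T : jsub n j) : S != T -> exists a, jidx T a \notin val S.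
Proof.
move=> nST; apply/existsP; apply: contraR nST; rewrite negb_exists => /forallP H.
apply/eqP; apply: val_inj; apply/eqP; rewrite eq_sym eqEcard (eqP (valP S)) (eqP (valP T)) leqnn andbT.
apply/subsetP => x /jidx_onto [a <-]; by have := H a; rewrite negbK.
Qed.

Lemma phi_v (R : realType) n j (E : 'M[R]_n) (S T : jsub n j) :
  E \in unitmx -> phi (invmx E) S (vT E T) = (S == T)%:R.
Proof.
move=> uE; rewrite phi_wedge mul_rowsub_mx mulmxV //.
have [<-|nST] := eqVneq S T.
  have -> : colsub (jidx S) (rowsub (jidx S) (1%:M : 'M[R]_n)) = 1%:M.
    by apply/matrixP => a b; rewrite !mxE (inj_eq (@jidx_inj n j S)).
  by rewrite det1.
have [a Ha] := jsub_neq nST.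
rewrite (expand_det_row _ a) big1 // => b _; rewrite !mxE.
suff -> : (jidx T a == jidx S b) = false by rewrite mul0r.
apply/negP => /eqP E1; move: Ha; rewrite E1 jidxP //.
Qed.

Lemma phi_lin (R : realType) n j (E : 'M[R]_n) (S : jsub n j) (w : ext R n j)
  (a : jsub n j -> R) : E \in unitmx ->
  (forall S', w S' = \sum_(T : jsub n j) a T * vT E T S') -> phi (invmx E) S w = a S.
Proof.
move=> uE Hw; rewrite /phi.
under eq_bigr => S' _ do rewrite Hw big_distrl /=.
rewrite exchange_big /=.
rewrite (eq_bigr (fun T => a T * (S == T)%:R)); last first.
  move=> T _; rewrite -(phi_v S T uE) /phi big_distrr /=.
  by apply: eq_bigr => S' _; rewrite mulrA.
rewrite (bigD1 S) //= eqxx mulr1 big1 ?addr0 // => T nT.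
by rewrite eq_sym (negPf nT) mulr0.
Qed.

Lemma phiB (R : realType) n j (F : 'M[R]_n) (S : jsub n j) (w v : ext R n j) d :
  phi F S (fun S' => w S' - d * v S') = phi F S w - d * phi F S v.
Proof.
rewrite /phi mulr_sumr -sumrB; apply: eq_bigr => S' _.
by rewrite mulrBl mulrA.
Qed.

Lemma phiN (R : realType) n j (F : 'M[R]_n) (S : jsub n j) (w : ext R n j) :
  phi F S (fun S' => - w S') = - phi F S w.
Proof.
by rewrite /phi -sumrN; apply: eq_bigr => S' _; rewrite mulNr.
Qed.


Lemma sign2 (R : realType) (b : bool) : (-1) ^+ b * (-1) ^+ b = 1 :> R.
Proof. by rewrite -signr_addb addbb. Qed.

Lemma signL (R : realType) n j (E : 'M[R]_n) sigma (K : ext R n j -> Prop) S w :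
  E \in unitmx -> (forall w, K w -> basic_cone E sigma w) -> ext_interior K w ->
  0 < (-1) ^+ sigma S * phi (invmx E) S w.
Proof.
move=> uE HK [e e0 Hball].
pose M : R := \sum_(S' : jsub n j) `|vT E S S'|.
have M0 : 0 <= M by apply: sumr_ge0 => S' _.
pose d := e / (M + 1).
have d0 : 0 < d by rewrite divr_gt0 // ltr_wpDl.
pose w' := fun S' => w S' - ((-1) ^+ sigma S * d) * vT E S S'.
have Kw' : K w'.
  apply: Hball => S'; rewrite /w' addrAC subrr add0r normrN normrM normrM normr_sign mul1r.
  have vM : `|vT E S S'| <= M.
    by rewrite /M (bigD1 S') //= lerDl sumr_ge0.
  rewrite gtr0_norm //; apply: (le_lt_trans (ler_wpM2l (ltW d0) vM)).
  rewrite /d mulrAC ltr_pdivrMr ?ltr_wpDl // ltr_pM2l // ltrDl //.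
have [c [c0 Hc]] := HK _ Kw'.
have P1 : phi (invmx E) S w' = c S * (-1) ^+ sigma S.
  apply: (@phi_lin _ _ _ E S w' (fun T => c T * (-1) ^+ sigma T)) => // S'; rewrite Hc; apply: eq_bigr => T _.
  by rewrite mulrA.
move: P1; rewrite /w' phiB phi_v // eqxx mulr1 => P1.
have -> : phi (invmx E) S w = c S * (-1) ^+ sigma S + (-1) ^+ sigma S * d.
  by rewrite -P1 subrK.
rewrite mulrDr mulrCA sign2 mulr1 mulrA sign2 mul1r.
by rewrite ltr_wpDl.
Qed.

Lemma signA (R : realType) n j (E : 'M[R]_n) sigma (K : ext R n j -> Prop) (X : 'M[R]_(j, n)) :
  E \in unitmx -> (forall w, K w -> basic_cone E sigma w) ->
  ext_interior K (wedge X) \/ ext_interior (ext_neg K) (wedge X) ->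
  exists eps : bool, forall S,
    0 < (-1) ^+ eps * ((-1) ^+ sigma S * \det (colsub (jidx S) (X *m invmx E))).
Proof.
move=> uE HK [H|[e e0 H]].
  by exists false; move=> S; rewrite expr0 mul1r -phi_wedge; apply: signL H.
exists true; move=> S; rewrite expr1 mulN1r -mulrN -phi_wedge -phiN.
apply: (signL _ uE HK); exists e => // v Hv.
have -> : v = (fun S => - (fun S => - v S) S).
  by apply: functional_extensionality => S'; rewrite opprK.
apply: (H (fun S => - v S)) => S'; have := Hv S'.
by rewrite -opprD normrN opprK.
Qed.

Lemma det_colsub_perm (R : comRingType) j n (g : 'I_j -> 'I_n) (s : 'S_j) (Y : 'M[R]_(j, n)) :
  \det (colsub (g \o s) Y) = (-1) ^+ s * \det (colsub g Y).
Proof.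
have -> : colsub (g \o s) Y = col_perm s (colsub g Y) by apply/matrixP => a b; rewrite !mxE.
rewrite col_permE det_mulmx det_perm odd_permV mulrC //.
Qed.

Lemma laplace0 (R : comRingType) m n (Y : 'M[R]_(m.+1, n)) (P : 'I_(m.+2) -> 'I_n) :
  \sum_(k < m.+2) Y 0 (P k) * ((-1) ^+ k * \det (colsub (P \o lift k) Y)) = 0.
Proof.
pose r (a : 'I_(m.+2)) : 'I_(m.+1) := if unlift 0 a is Some a' then a' else 0.
pose M := \matrix_(a, b) Y (r a) (P b).
have : \det M = 0.
  apply: (@determinant_alternate _ _ _ 0 1) => // b.
  have E1 : (1 : 'I_(m.+2)) = lift 0 0 by apply: val_inj.
  by rewrite !mxE /r E1 liftK unlift_none.
move=> H0; transitivity (\det M); last exact: H0.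
rewrite (expand_det_row _ 0); apply: eq_bigr => k _.
rewrite /cofactor !mxE /r unlift_none add0n; congr (_ * (_ * \det _)).
by apply/matrixP => a b; rewrite !mxE /r liftK.
Qed.


Lemma noflip (R : realType) m n (sigma : jsub n m.+1 -> bool) (eps : bool) (Y : 'M[R]_(m.+1, n))
  (P : 'I_(m.+2) -> 'I_n) (Sk : 'I_(m.+2) -> jsub n m.+1) (pk : 'I_(m.+2) -> 'S_(m.+1)) :
  (forall S, 0 < (-1) ^+ eps * ((-1) ^+ sigma S * \det (colsub (jidx S) Y))) ->
  (forall k b, P (lift k b) = jidx (Sk k) (pk k b)) ->
  ~ (forall k : 'I_(m.+2), 0 < ((-1) ^+ k * (-1) ^+ (pk k) * (-1) ^+ sigma (Sk k)) * Y 0 (P k)).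
Proof.
move=> HY HP Hk.
have L := laplace0 Y P.
have term : forall k : 'I_(m.+2),
    0 < (-1) ^+ eps * (Y 0 (P k) * ((-1) ^+ k * \det (colsub (P \o lift k) Y))).
  move=> k.
  have -> : colsub (P \o lift k) Y = colsub (jidx (Sk k) \o pk k) Y.
    by apply/matrixP => a b; rewrite !mxE /= HP.
  rewrite det_colsub_perm.
  set y := Y 0 (P k); set d := \det (colsub (jidx (Sk k)) Y).
  set s1 : R := (-1) ^+ eps; set s2 : R := (-1) ^+ (sigma (Sk k)); set s3 : R := (-1) ^+ k;
  set s4 : R := (-1) ^+ (pk k).
  have E2 : s2 * s2 = 1 by apply: sign2.
  have -> : s1 * (y * (s3 * (s4 * d))) = (s3 * s4 * s2 * y) * (s1 * (s2 * d)).
    transitivity (s1 * (y * (s3 * (s4 * d))) * (s2 * s2)); first by rewrite E2 mulr1.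
    ring.
  by rewrite mulr_gt0 // ; [exact: Hk | exact: HY].
have : 0 < (-1) ^+ eps * \sum_(k < m.+2) Y 0 (P k) * ((-1) ^+ k * \det (colsub (P \o lift k) Y)).
  rewrite big_distrr /= (bigD1 ord0) //= ltr_wpDr //.
  by apply: sumr_ge0 => k _; apply: ltW.
by rewrite L mulr0 ltxx.
Qed.


Lemma colsel (R : realType) n k (U E : 'M[R]_n) : E \in unitmx -> (k <= \rank U)%N ->
  exists P : 'I_k -> 'I_n, injective P /\ forall t : 'rV[R]_k, exists u' : 'rV[R]_n,
     (u' *m E <= U)%MS /\ forall a, u' 0 (P a) = t 0 a.
Proof.
move=> uE hk.
set U' := U *m invmx E.
have rU' : \rank U' = \rank U by rewrite mxrankMfree // row_free_unit unitmx_inv.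
set r := \rank U'^T.
set g := maxrankfun U'^T.
set C := colsub g U'.
have Cfull : row_full C.
  rewrite /row_full -mxrank_tr.
  have -> : C^T = rowsub g U'^T by apply/matrixP => a b; rewrite !mxE.
  exact: maxrowsub_free.
set h := fullrankfun Cfull.
set Q := rowsub h C.
have uQ : Q \in unitmx by apply: fullrowsub_unit.
have Hle : (k <= r)%N by rewrite /r mxrank_tr rU'.
exists (fun a => g (widen_ord Hle a)); split.
  by move=> a b /maxrankfun_inj /(congr1 val) /= /val_inj.
move=> t.
pose t' := \row_(a < r) (if insub (val a) is Some b then t 0 b else 0).
exists (t' *m invmx Q *m rowsub h U'); split.
  rewrite /U' -mul_rowsub_mx -!mulmxA mulVmx // mulmx1.
  rewrite [rowsub h U]rowsubE !mulmxA; exact: submxMl.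
move=> a.
have Hc : colsub g (t' *m invmx Q *m rowsub h U') = t'.
  rewrite -mulmx_colsub.
  have -> : colsub g (rowsub h U') = Q by apply/matrixP => x y; rewrite !mxE.
  by rewrite -mulmxA mulVmx // mulmx1.
move/matrixP: Hc => /(_ 0 (widen_ord Hle a)).
by rewrite !mxE /= valK.
Qed.


Definition good (R : realType) n j (K : ext R n j -> Prop) (w : ext R n j) :=
  ext_interior K w \/ ext_interior (ext_neg K) w.

Definition Aset (R : realType) n j (K : ext R n j -> Prop) (x : 'rV[R]_n) :=
  exists X : 'M[R]_(j, n), (forall i : 'I_j, val i = 0%N -> row i X = x) /\ good K (wedge X).

Lemma int_ext (R : realType) n j (K : ext R n j -> Prop) (w w' : ext R n j) :
  (forall S, w S = w' S) -> ext_interior K w -> ext_interior K w'.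
Proof. by move=> H [e e0 Hb]; exists e => // v Hv; apply: Hb => S; rewrite H. Qed.

Lemma int_negE (R : realType) n j (K : ext R n j -> Prop) (w : ext R n j) :
  ext_interior (ext_neg K) w <-> ext_interior K (fun S => - w S).
Proof.
split => -[e e0 Hb]; exists e => // v Hv.
  have -> : v = (fun S => - (fun S => - v S) S).
    by apply: functional_extensionality => S'; rewrite opprK.
  by apply: Hb => S; have := Hv S; rewrite -opprD normrN opprK.
by apply: Hb => S; have := Hv S; rewrite -opprD normrN.
Qed.

Lemma int_scale (R : realType) n j (K : ext R n j -> Prop) (w : ext R n j) a :
  proper_cone K -> 0 < a -> ext_interior K w -> ext_interior K (fun S => a * w S).
Proof.
move=> [_ _ Ksc _ _] a0 [e e0 Hb]; exists (a * e); first exact: mulr_gt0.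
move=> v Hv.
have -> : v = (fun S => a * (fun S => a^-1 * v S) S).
  apply: functional_extensionality => S; rewrite mulrA mulfV ?mul1r //.
  by rewrite gt_eqF.
apply: Ksc; first exact: ltW.
apply: Hb => S.
have -> : a^-1 * v S - w S = a^-1 * (v S - a * w S).
  by rewrite mulrBr mulrA mulVf ?mul1r // gt_eqF.
rewrite normrM gtr0_norm ?invr_gt0 // -(ltr_pM2l a0) mulrA mulfV ?mul1r ?gt_eqF //; exact: Hv.
Qed.

Lemma good_scale (R : realType) n j (K : ext R n j -> Prop) (w : ext R n j) a :
  proper_cone K -> a != 0 -> good K w -> good K (fun S => a * w S).
Proof.
move=> pK a0 Hw.
have [ap|an] := ltP 0 a.
  case: Hw => H; [left|right]; first exact: int_scale.
  apply/int_negE; apply: (@int_ext _ _ _ _ (fun S => a * (fun S => - w S) S)).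
    by move=> S; rewrite mulrN.
  by apply: int_scale => //; apply/int_negE.
have an' : 0 < - a by rewrite oppr_gt0 lt_neqAle a0 an.
case: Hw => H; [right|left].
  apply/int_negE; apply: (@int_ext _ _ _ _ (fun S => - a * w S)).
    by move=> S; rewrite mulNr.
  exact: int_scale.
apply: (@int_ext _ _ _ _ (fun S => - a * (fun S => - w S) S)).
  by move=> S; rewrite mulrNN.
by apply: int_scale => //; apply/int_negE.
Qed.

Lemma Arow (R : realType) n m (K : ext R n m.+1 -> Prop) (X : 'M[R]_(m.+1, n)) (c : 'rV[R]_(m.+1)) :
  proper_cone K -> c 0 0 != 0 -> good K (wedge X) -> Aset K (c *m X).
Proof.
move=> pK c0 gX.
pose M : 'M[R]_(m.+1) := \matrix_(p, q) if p == 0 then c 0 q else (p == q)%:R.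
have dM : \det M = c 0 0.
  rewrite -det_tr det_trig.
    rewrite (bigD1 ord0) //= big1 ?mulr1; first by rewrite !mxE eqxx.
    by move=> i /negPf ni; rewrite !mxE ni eqxx.
  apply/is_trig_mxP => i k ik; rewrite !mxE.
  have -> : (k == 0) = false by apply/negP => /eqP k0; move: ik; rewrite k0.
  by rewrite eq_sym; case: eqP => // E1; move: ik; rewrite E1 ltnn.
exists (M *m X); split.
  move=> i i0; have -> : i = 0 by apply: val_inj.
  rewrite row_mul; congr (_ *m _); apply/rowP => q; rewrite !mxE //.
have := @good_scale _ _ _ _ _ (c 0 0) pK c0 gX.
case => H; [left|right]; apply: (int_ext _ H) => S.
  by rewrite /wedge -mulmx_colsub det_mulmx dM.
by rewrite /wedge -mulmx_colsub det_mulmx dM.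
Qed.


Lemma closure_closed (R : realType) n (A : 'rV[R]_n -> Prop) : rv_closed (rv_closure A).
Proof.
move=> x Hx e e0.
have e20 : 0 < e / 2 by rewrite divr_gt0.
have [y [Hy Hyx]] := Hx _ e20.
have [z [Hz Hzy]] := Hy _ e20.
exists z; split => // i.
rewrite -(subrK (y 0 i) (z 0 i)) -addrA (le_lt_trans (ler_normD _ _)) //.
by rewrite (splitr e) ltrD.
Qed.

Lemma small_t (R : realType) n (x : 'rV[R]_n) e : 0 < e ->
  exists t, 0 < t /\ forall i, `|t * x 0 i| < e.
Proof.
move=> e0; pose M := \sum_i `|x 0 i|.
have M0 : 0 <= M by apply: sumr_ge0.
exists (e / (M + 1)); split; first by rewrite divr_gt0 // ltr_wpDl.
move=> i; rewrite normrM gtr0_norm ?divr_gt0 ?ltr_wpDl //.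
have xM : `|x 0 i| <= M by rewrite /M (bigD1 i) //= lerDl sumr_ge0.
apply: (le_lt_trans (ler_wpM2l _ xM)); first by rewrite ltW // divr_gt0 // ltr_wpDl.
by rewrite mulrAC ltr_pdivrMr ?ltr_wpDl // ltr_pM2l // ltrDl.
Qed.

Lemma A_scale (R : realType) n m (K : ext R n m.+1 -> Prop) x a :
  proper_cone K -> a != 0 -> Aset K x -> Aset K (a *: x).
Proof.
move=> pK a0 [X [HX gX]].
have -> : a *: x = (a *: delta_mx 0 0) *m X.
  by rewrite -scalemxAl -rowE (HX 0).
by apply: Arow => //; rewrite !mxE eqxx mulr1.
Qed.

Lemma T_scale (R : realType) n m (K : ext R n m.+1 -> Prop) x a :
  proper_cone K -> rv_closure (Aset K) x -> rv_closure (Aset K) (a *: x).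
Proof.
move=> pK Hx.
have gen : forall b y, b != 0 -> rv_closure (Aset K) y -> rv_closure (Aset K) (b *: y).
  move=> b y b0 Hy e e0.
  have eb : 0 < e / `|b| by rewrite divr_gt0 // normr_gt0.
  have [z [Hz Hzy]] := Hy _ eb.
  exists (b *: z); split; first exact: A_scale.
  move=> i; rewrite !mxE -mulrBr normrM.
  by rewrite -ltr_pdivlMl ?normr_gt0 // mulrC; apply: Hzy.
have [->|a0] := eqVneq a 0; last exact: gen.
rewrite scale0r; apply: closure_closed => e e0.
have [t [t0 Ht]] := small_t x e0.
exists (t *: x); split; first by apply: gen => //; rewrite gt_eqF.
by move=> i; rewrite !mxE subr0.
Qed.


Lemma A_in_closure (R : realType) n (A : 'rV[R]_n -> Prop) x : A x -> rv_closure A x.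
Proof. by move=> Ax e e0; exists x; split => // i; rewrite subrr normr0. Qed.

Lemma rank_X (R : realType) n m (E : 'M[R]_n) sigma (K : ext R n m.+1 -> Prop) X :
  E \in unitmx -> (forall w, K w -> basic_cone E sigma w) -> (m.+1 <= n)%N ->
  good K (wedge X) -> \rank X = m.+1.
Proof.
move=> uE HK Hjn gX.
have cS : #|[set widen_ord Hjn i | i in [set: 'I_(m.+1)]]| == m.+1.
  rewrite card_imset; first by rewrite cardsT card_ord.
  by move=> a b; move/(congr1 val) => /= /val_inj.
pose S0 : jsub n m.+1 := exist (fun A : {set 'I_n} => #|A| == m.+1) _ cS.
have [eps Heps] := signA uE HK gX.
have := Heps S0; set d := \det _ => Hd.
have d0 : d != 0 by apply: contraTneq Hd => ->; rewrite !mulr0 ltxx.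
have : \rank (colsub (jidx S0) (X *m invmx E)) = m.+1.
  by apply: mxrank_unit; rewrite unitmxE unitfE.
rewrite -mulmx_colsub => H1.
apply/eqP; rewrite eqn_leq rank_leq_row /= -{1}H1.
exact: mxrankM_maxl.
Qed.

Lemma exU (R : realType) n m (E : 'M[R]_n) sigma (K : ext R n m.+1 -> Prop) x :
  proper_cone K ->
  E \in unitmx -> (forall w, K w -> basic_cone E sigma w) -> (m.+1 <= n)%N ->
  Aset K x -> exists U : 'M[R]_n, \rank U = m.+1 /\ subspace_in U (rv_closure (Aset K)).
Proof.
move=> pK uE HK Hjn [X [HX gX]].
exists (<<X>>%MS); split; first by rewrite mxrank_gen (rank_X uE HK).
move=> v; rewrite genmxE => /submxP [c ->].
have [c0|c0] := eqVneq (c 0 0) 0; last by apply: A_in_closure; apply: Arow.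
move=> e e0.
have [t [t0 Ht]] := small_t (row 0 X) e0.
exists ((c + t *: delta_mx 0 0) *m X); split.
  by apply: Arow => //; rewrite !mxE c0 eqxx mulr1 add0r gt_eqF.
move=> i; rewrite mulmxDl -scalemxAl -rowE [X in X - _]mxE addrAC subrr add0r [X in `|X|]mxE.
exact: Ht.
Qed.


Lemma lin_bound (R : realType) n (v : 'rV[R]_n) (F : 'M[R]_n) e :
  0 < e -> (forall a, `|v 0 a| < e) ->
  forall b, `|(v *m F) 0 b| <= e * \sum_a \sum_b' `|F a b'|.
Proof.
move=> e0 Hv b; rewrite mxE big_distrr /=.
apply: (le_trans (ler_norm_sum _ _ _)); apply: ler_sum => a _.
rewrite normrM; apply: (le_trans (ler_wpM2r _ (ltW (Hv a)))) => //.
apply: ler_wpM2l; first exact: ltW.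
by rewrite (bigD1 b) //= lerDl sumr_ge0.
Qed.

Lemma tau_pos (R : realType) (t z : R) : `|t| = 1 -> t * t = 1 -> `|z - t| < 1 -> 0 < t * z.
Proof.
move=> nt tt Hz.
have -> : t * z = 1 + t * (z - t) by rewrite mulrBr tt addrC subrK.
have : `|t * (z - t)| < 1 by rewrite normrM nt mul1r.
set q := t * (z - t) => Hq.
have := ler_norm (- q); rewrite normrN => H.
lra.
Qed.

Lemma ub (R : realType) n m (E : 'M[R]_n) sigma (K : ext R n m.+1 -> Prop) :
  E \in unitmx -> (forall w, K w -> basic_cone E sigma w) ->
  forall U : 'M[R]_n, subspace_in U (rv_closure (Aset K)) -> (\rank U <= m.+1)%N.
Proof.
move=> uE HK U HU; rewrite leqNgt; apply/negP => Hr.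
have [P [Pinj HP]] := @colsel R n m.+2 U E uE Hr.
have dec : forall k : 'I_(m.+2), exists p : jsub n m.+1 * 'S_(m.+1),
    forall b, P (lift k b) = jidx p.1 (p.2 b).
  move=> k; have [S [s Hs]] := @jdecomp n m.+1 (P \o lift k) (inj_comp Pinj (@lift_inj _ k)).
  by exists (S, s).
have [pf Hpf] := fin_all_exists dec.
pose tau (k : 'I_(m.+2)) : R := (-1) ^+ k * (-1) ^+ (pf k).2 * (-1) ^+ sigma (pf k).1.
have [u' [Hu' Hu'P]] := HP (\row_(k < m.+2) tau k).
have Tu := HU _ Hu'.
set F := invmx E.
pose St : R := \sum_a \sum_b `|F a b|.
have St0 : 0 <= St by do 2 (apply: sumr_ge0 => ? _).
have e0 : 0 < 1 / (1 + St) by rewrite divr_gt0 //; lra.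
have [y [[X [HX gX]] Hy]] := Tu _ e0.
have [eps Heps] := signA uE HK gX.
apply: (@noflip R m n sigma eps (X *m F) P (fun k => (pf k).1) (fun k => (pf k).2) Heps Hpf).
move=> k.
have Y0 : (X *m F) 0 (P k) = (y *m F) 0 (P k).
  by rewrite -(HX 0) // -row_mul [RHS]mxE.
have Eu : u' = (u' *m E) *m F by rewrite mulmxK.
have Hd : `|(X *m F) 0 (P k) - u' 0 (P k)| < 1.
  rewrite Y0 [in X in _ - X]Eu.
  have -> : (y *m F) 0 (P k) - ((u' *m E) *m F) 0 (P k) = ((y - u' *m E) *m F) 0 (P k).
    by rewrite mulmxBl [RHS]mxE; congr (_ + _); rewrite [RHS]mxE.
  apply: (le_lt_trans (@lin_bound R n (y - u' *m E) F _ e0 _ (P k))).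
    by move=> a; rewrite mxE [X in _ + X]mxE; apply: Hy.
  rewrite mul1r mulrC ltr_pdivrMr -/St; lra.
rewrite Hu'P mxE in Hd.
apply: tau_pos => //.
  by rewrite /tau !normrM !normr_sign !mulr1.
rewrite /tau -signr_odd.
set a : R := (-1) ^+ odd k; set b : R := (-1) ^+ (pf k).2; set c : R := (-1) ^+ sigma (pf k).1.
have Ha : a * a = 1 by apply: sign2.
have Hb : b * b = 1 by apply: sign2.
have Hc : c * c = 1 by apply: sign2.
transitivity ((a * a) * (b * b) * (c * c)); first ring.
by rewrite Ha Hb Hc !mulr1.
Qed.


Unset Implicit Arguments.
Set Strict Implicit.
Theorem theorem5 (R : realType) (n j : nat) (K : ext R n j -> Prop) :
  (2 <= j)%N -> (j <= n)%N ->
  proper_cone K ->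
  (exists (E : 'M[R]_n) (sigma : jsub n j -> bool),
      E \in unitmx /\ (forall w, K w -> basic_cone E sigma w)) ->
  (exists x, Tset K x) ->
  cone_of_rank j (Tset K).
Proof.
move=> hj hjn pK [E [sigma [uE HK]]] [x Tx].
destruct j as [|m]; first by [].
change (Tset K) with (rv_closure (Aset K)) in Tx |- *.
split.
- exact: closure_closed.
- by move=> a y Hy; apply: T_scale.
- have [y [Ay _]] := Tx 1 ltr01.
  exact: (exU pK uE HK hjn Ay).
- exact: (ub uE HK).
Qed.
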